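(* Let $d\ge1$ and let $\{N_i(t_i),\ t_i\ge0\}$, $i=1,\dots,d$, be independent one-parameter counting processes. Define $\mathcal{N}(\mathbf{t})=N_1(t_1)+N_2(t_2)+\dots+N_d(t_d)$ for $\mathbf{t}=(t_1,\dots,t_d)\in\mathbb{R}^d_+$. Let $\boldsymbol{\Lambda}=(\lambda_1,\dots,\lambda_d)$ with all $\lambda_i>0$. Then $\{\mathcal{N}(\mathbf{t}),\ \mathbf{t}\in\mathbb{R}^d_+\}$ is a $d$-parameter Poisson process with transition parameter $\boldsymbol{\Lambda}$ if and only if, for each $i=1,\dots,d$, $\{N_i(t_i),\ t_i\ge0\}$ is a Poisson process with transition rate $\lambda_i$.
   Context: A one-parameter counting process is a nonnegative-integer-valued process $N$ with $N(0)=0$ and nondecreasing paths. On $\mathbb{R}^d_+$ use the componentwise partial order: $\mathbf{s}\preceq\mathbf{t}$ iff $s_i\le t_i$ for all $i$; $\mathbf{s}\prec\mathbf{t}$ denotes the strict relation; differences are componentwise and $\boldsymbol{\Lambda}\cdot\mathbf{t}=\sum_i\lambda_it_i$. A multiparameter counting process is a nonnegative-integer-valued random field $\{\mathcal{N}(\mathbf{t}),\mathbf{t}\in\mathbb{R}^d_+\}$ with $\mathcal{N}(\mathbf{0})=0$ and $\mathcal{N}(\mathbf{s})\le\mathcal{N}(\mathbf{t})$ whenever $\mathbf{s}\preceq\mathbf{t}$. A multiparameter (d-parameter) Poisson process (MPP) with transition parameter $\boldsymbol{\Lambda}=(\lambda_1,\dots,\lambda_d)$, $\lambda_i>0$, is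 a multiparameter counting process such that (i) for any $\mathbf{0}=\mathbf{t}^{(0)}\prec\mathbf{t}^{(1)}\prec\dots\prec\mathbf{t}^{(m)}$ the increments $\mathcal{N}(\mathbf{t}^{(k)})-\mathcal{N}(\mathbf{t}^{(k-1)})$, $k=1,\dots,m$, are independent; (ii) for $\mathbf{s}\preceq\mathbf{t}$, $\mathcal{N}(\mathbf{t})-\mathcal{N}(\mathbf{s})$ has the same distribution as $\mathcal{N}(\mathbf{t}-\mathbf{s})$; (iii) for each $\mathbf{t}$, $\mathcal{N}(\mathbf{t})$ is Poisson with mean $\boldsymbol{\Lambda}\cdot\mathbf{t}$. *)

(* Defs.v *)
From HB Require Import structures.
From mathcomp Require Import all_boot all_order all_algebra.
From mathcomp Require Import all_classical all_reals all_analysis.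
Set Implicit Arguments. Unset Strict Implicit. Unset Printing Implicit Defensive.
Import Order.TTheory GRing.Theory Num.Theory.
Local Open Scope classical_set_scope.
Local Open Scope ring_scope.

Section Defs.
Context {d0 : measure_display} {T : measurableType d0} {R : realType}.
Variable P : probability T R.

Definition nat_rv (X : T -> nat) := forall n : nat, measurable [set w | X w = n].

Definition mutually_indep (m : nat) (X : 'I_m -> T -> nat) :=
  forall B : 'I_m -> set nat,
    P (\bigcap_(k in [set: 'I_m]) (X k @^-1` B k)) =
    (\prod_(k < m) P (X k @^-1` B k))%E.

(* Poisson law with mean mu >= 0 (mu = 0 gives the Dirac mass at 0). *)
Definition poisson_law (mu : R) (n : nat) : R :=
  expR (- mu) * mu ^+ n / (n`!)%:R.

Definition has_poisson_law (X : T -> nat) (mu : R) :=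
  forall n : nat, P [set w | X w = n] = (poisson_law mu n)%:E.

Definition same_law (X Y : T -> nat) :=
  forall B : set nat, P (X @^-1` B) = P (Y @^-1` B).

Definition counting_process (N : R -> T -> nat) :=
  (forall t, 0 <= t -> nat_rv (N t)) /\
  (forall w, N 0 w = 0%N) /\
  (forall s t w, 0 <= s -> s <= t -> (N s w <= N t w)%N).

Definition poisson_process (lam : R) (N : R -> T -> nat) :=
  counting_process N /\
  (* independent increments over 0 = t_0 < t_1 < ... < t_m *)
  (forall (m : nat) (tt : 'I_m.+1 -> R), tt ord0 = 0 ->
     (forall k : 'I_m, tt (widen_ord (leqnSn m) k) < tt (lift ord0 k)) ->
     mutually_indep (fun k : 'I_m => fun w =>
        (N (tt (lift ord0 k)) w - N (tt (widen_ord (leqnSn m) k)) w)%N)) /\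
  (forall s t, 0 <= s -> s <= t ->
     same_law (fun w => (N t w - N s w)%N) (N (t - s))) /\
  (forall t, 0 <= t -> has_poisson_law (N t) (lam * t)).

Definition indep_processes (d : nat) (N : 'I_d -> R -> T -> nat) :=
  forall (k : nat) (tt : 'I_d -> 'I_k -> R)
         (B : 'I_d -> set ({ffun 'I_k -> nat})),
    (forall i j, 0 <= tt i j) ->
    P (\bigcap_(i in [set: 'I_d])
         [set w | [ffun j => N i (tt i j) w] \in B i]) =
    (\prod_(i < d) P [set w | [ffun j => N i (tt i j) w] \in B i])%E.

Definition ple (d : nat) (s t : 'I_d -> R) := forall i, s i <= t i.
Definition plt (d : nat) (s t : 'I_d -> R) := ple s t /\ s <> t.
Definition nonneg_pt (d : nat) (t : 'I_d -> R) := forall i, 0 <= t i.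

Definition mcounting_process (d : nat) (N : ('I_d -> R) -> T -> nat) :=
  (forall t, nonneg_pt t -> nat_rv (N t)) /\
  (forall w, N (fun _ => 0) w = 0%N) /\
  (forall s t w, nonneg_pt s -> ple s t -> (N s w <= N t w)%N).

Definition mpp (d : nat) (Lam : 'I_d -> R) (N : ('I_d -> R) -> T -> nat) :=
  mcounting_process N /\
  (* (i) independent increments along 0 = t^(0) < t^(1) < ... < t^(m) *)
  (forall (m : nat) (tt : 'I_m.+1 -> 'I_d -> R), tt ord0 = (fun _ => 0) ->
     (forall k : 'I_m, plt (tt (widen_ord (leqnSn m) k)) (tt (lift ord0 k))) ->
     mutually_indep (fun k : 'I_m => fun w =>
        (N (tt (lift ord0 k)) w - N (tt (widen_ord (leqnSn m) k)) w)%N)) /\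
  (forall s t, nonneg_pt s -> ple s t ->
     same_law (fun w => (N t w - N s w)%N) (N (fun i => t i - s i))) /\
  (forall t, nonneg_pt t -> has_poisson_law (N t) (\sum_(i < d) Lam i * t i)).

End Defs.

(* Main.v *)
Require Import Defs.
From HB Require Import structures.
From mathcomp Require Import all_boot all_order all_algebra.
From mathcomp Require Import all_classical all_reals all_analysis.
From mathcomp Require Import ring lra.
Import Order.TTheory GRing.Theory Num.Theory.
Local Open Scope classical_set_scope.
Local Open Scope ring_scope.
Set Implicit Arguments. Unset Strict Implicit. Unset Printing Implicit Defensive.

Section Gen.
Context {d0 : measure_display} {T : measurableType d0} {R : realType}.
Variable P : probability T R.

Lemma nat_rv_pre (X : T -> nat) (B : set nat) : nat_rv X -> measurable (X @^-1` B).
Proof.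
move=> HX.
have -> : X @^-1` B = \bigcup_(n in B) [set w | X w = n].
  by apply/seteqP; split => w /=; [move=> h; exists (X w) | case=> n Bn ->].
by apply: bigcup_measurable => n _; exact: HX.
Qed.

Lemma nat_rv_cst (c : nat) : nat_rv (fun _ : T => c).
Proof.
move=> n; case: (pselect (c = n)) => [->|h].
  by rewrite (_ : [set w | n = n] = setT) //; apply/seteqP; split.
by rewrite (_ : [set w | c = n] = set0) //; apply/seteqP; split => w //=.
Qed.

Lemma nat_rv_comp2 (g : nat -> nat -> nat) (X Y : T -> nat) :
  nat_rv X -> nat_rv Y -> nat_rv (fun w => g (X w) (Y w)).
Proof.
move=> HX HY a.
have -> : [set w | g (X w) (Y w) = a] =
  \bigcup_(n in [set: nat]) \bigcup_(m in [set m | g n m = a])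
     ([set w | X w = n] `&` [set w | Y w = m]).
  apply/seteqP; split => w /=.
    by move=> h; exists (X w) => //; exists (Y w).
  by case=> n _ [m /= h [-> ->]].
apply: bigcup_measurable => n _; apply: bigcup_measurable => m _.
by apply: measurableI; [exact: HX | exact: HY].
Qed.

Lemma nat_rv_sum (d : nat) (X : 'I_d -> T -> nat) :
  (forall i, nat_rv (X i)) -> nat_rv (fun w => (\sum_(i < d) X i w)%N).
Proof.
elim: d X => [|d IH] X HX.
  by rewrite (_ : (fun w => _) = fun _ => 0%N); [exact: nat_rv_cst|
    apply: funext => w; rewrite big_ord0].
rewrite (_ : (fun w => _) = fun w => (X ord0 w + \sum_(i < d) X (lift ord0 i) w)%N).
  by apply: (nat_rv_comp2 addn); [exact: HX | apply: IH => i; exact: HX].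
by apply: funext => w; rewrite big_ord_recl.
Qed.

Lemma bigcap_ord0 (F : 'I_0 -> set T) : \bigcap_(k in [set: 'I_0]) F k = setT.
Proof. by apply/seteqP; split => w // _ [] []. Qed.

Lemma bigcapS (n : nat) (F : 'I_n.+1 -> set T) :
  \bigcap_(k in [set: 'I_n.+1]) F k =
  F ord0 `&` \bigcap_(k in [set: 'I_n]) F (lift ord0 k).
Proof.
apply/seteqP; split => w /=.
  by move=> H; split; [exact: H | move=> k _; exact: H].
by case=> H0 H k _; case: (unliftP ord0 k) => [j ->|->]; [exact: H|].
Qed.

Lemma bigcapD1 (n : nat) (j : 'I_n.+1) (F : 'I_n.+1 -> set T) :
  \bigcap_(k in [set: 'I_n.+1]) F k =
  F j `&` \bigcap_(k in [set: 'I_n]) F (lift j k).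
Proof.
apply/seteqP; split => w /=.
  by move=> H; split; [exact: H | move=> k _; exact: H].
by case=> H0 H k _; case: (unliftP j k) => [i ->|->]; [exact: H|].
Qed.

Lemma bigcap_preT (n : nat) (X : 'I_n -> T -> nat) :
  \bigcap_(k in [set: 'I_n]) (X k @^-1` setT) = setT.
Proof. by apply/seteqP; split => w. Qed.

Lemma prod_preT (n : nat) (X : 'I_n -> T -> nat) :
  (\prod_(k < n) P (X k @^-1` setT))%E = 1%E.
Proof. by rewrite big1 // => k _; rewrite preimage_setT probability_setT. Qed.

Lemma fin_numP (A : set T) : measurable A -> P A = (fine (P A))%:E.
Proof. by move=> mA; rewrite fineK // fin_num_measure. Qed.

Lemma pre_series (Z : T -> nat) (E : set T) (B : set nat) :
  nat_rv Z -> measurable E ->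
  P (E `&` Z @^-1` B) =
  \big[+%E/0%E]_(0 <= n <oo | n \in B) P (E `&` [set w | Z w = n]).
Proof.
move=> HZ mE.
have -> : E `&` Z @^-1` B = \bigcup_(n in B) (E `&` [set w | Z w = n]).
  apply/seteqP; split => w /=.
    by case=> Ew Bw; exists (Z w).
  by case=> n Bn [Ew ->].
apply: measure_bigcup.
  by move=> n _; apply: measurableI => //; exact: HZ.
by move=> i j _ _ [w [[_ <-] [_ <-]]].
Qed.

Lemma pt2set (Z : T -> nat) (E : set T) :
  nat_rv Z -> measurable E ->
  (forall a, P (E `&` [set w | Z w = a]) = (P E * P [set w | Z w = a])%E) ->
  forall B, P (E `&` Z @^-1` B) = (P E * P (Z @^-1` B))%E.
Proof.
move=> HZ mE H B.
rewrite pre_series // -[Z @^-1` B]setTI pre_series //.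
rewrite (eq_eseriesr (g := fun n => (fine (P E))%:E * P (setT `&` [set w | Z w = n]))%E).
  by rewrite nneseriesZl -?fin_numP // => n _; exact: measure_ge0.
by move=> n _; rewrite H setTI -fin_numP.
Qed.

Lemma ptlaw (X Y : T -> nat) : nat_rv X -> nat_rv Y ->
  (forall a, P [set w | X w = a] = P [set w | Y w = a]) -> same_law P X Y.
Proof.
move=> HX HY H B.
rewrite -[X @^-1` B]setTI -[Y @^-1` B]setTI !pre_series //.
by apply: eq_eseriesr => n _; rewrite !setTI H.
Qed.

End Gen.

Section Gen2.
Context {d0 : measure_display} {T : measurableType d0} {R : realType}.
Variable P : probability T R.

Fixpoint convp (d : nat) : ('I_d -> nat -> \bar R) -> nat -> \bar R :=
  match d with
  | 0 => fun _ a => (if a == 0%N then 1 else 0)%E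
  | d'.+1 => fun p a => (\sum_(c < a.+1) p ord0 c *
                         convp (fun i => p (lift ord0 i)) (a - c))%E
  end.

Lemma convp_ge0 d (p : 'I_d -> nat -> \bar R) a :
  (forall i n, 0 <= p i n)%E -> (0 <= convp p a)%E.
Proof.
elim: d p a => [|d IH] p a Hp /=; first by case: (a == 0%N).
apply: sume_ge0 => c _; apply: mule_ge0 => //; exact: IH.
Qed.

Definition indepE (d : nat) (E : set T) (X : 'I_d -> T -> nat) :=
  forall B : 'I_d -> set nat,
    P (E `&` \bigcap_(k in [set: 'I_d]) (X k @^-1` B k)) =
    (P E * \prod_(k < d) P (X k @^-1` B k))%E.

Lemma indepE_T d (X : 'I_d -> T -> nat) : mutually_indep P X -> indepE setT X.
Proof. by move=> H B; rewrite setTI H probability_setT mul1e. Qed.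

Lemma indepT_E d (X : 'I_d -> T -> nat) : indepE setT X -> mutually_indep P X.
Proof. by move=> H B; have := H B; rewrite setTI probability_setT mul1e. Qed.

Lemma indepE_split d (X : 'I_d.+1 -> T -> nat) E c :
  indepE E X ->
  P (E `&` [set w | X ord0 w = c]) = (P E * P [set w | X ord0 w = c])%E /\
  indepE (E `&` [set w | X ord0 w = c]) (fun i => X (lift ord0 i)).
Proof.
move=> H.
have key : forall B : 'I_d -> set nat,
  P (E `&` [set w | X ord0 w = c] `&` \bigcap_(k in [set: 'I_d]) (X (lift ord0 k) @^-1` B k))
  = (P E * P [set w | X ord0 w = c] * \prod_(k < d) P (X (lift ord0 k) @^-1` B k))%E.
  move=> B.
  have := H (fun k => if unlift ord0 k is Some j then B j else [set c]).
  rewrite bigcapS big_ord_recl unlift_none.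
  under eq_bigcapr do rewrite liftK.
  under eq_bigr do rewrite liftK.
  by rewrite setIA muleA.
have H1 : P (E `&` [set w | X ord0 w = c]) = (P E * P [set w | X ord0 w = c])%E.
  have := key (fun _ => setT).
  by rewrite bigcap_preT setIT prod_preT mule1.
split => // B; by rewrite key H1.
Qed.

Lemma SumPt d : forall (X : 'I_d -> T -> nat) (E : set T), measurable E ->
  (forall i, nat_rv (X i)) -> indepE E X -> forall a,
  P (E `&` [set w | (\sum_(i < d) X i w)%N = a]) =
  (P E * convp (fun i n => P [set w | X i w = n]) a)%E.
Proof.
elim: d => [|d IH] X E mE HX HE a.
  rewrite /=; case: eqP => [->|ha].
    by rewrite mule1; congr (P _); apply/seteqP; split => w /=;
       [case| move=> Ew; split => //; rewrite big_ord0].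
  rewrite mule0 (_ : _ `&` _ = set0) ?measure0 //.
  by apply/seteqP; split => w //= [_]; rewrite big_ord0 => /esym.
have -> : E `&` [set w | (\sum_(i < d.+1) X i w)%N = a] =
  \big[setU/set0]_(c < a.+1) ((E `&` [set w | X ord0 w = c]) `&`
     [set w | (\sum_(i < d) X (lift ord0 i) w)%N = (a - c)%N]).
  rewrite -(bigcup_mkord a.+1 (fun c => (E `&` [set w | X ord0 w = c]) `&`
     [set w | (\sum_(i < d) X (lift ord0 i) w)%N = (a - c)%N])); apply/seteqP; split => w /=.
    case=> Ew; rewrite big_ord_recl => Hs.
    exists (X ord0 w); first by rewrite /= ltnS -Hs leq_addr.
    by split => //; rewrite -Hs addKn.
  case=> c /= Hc [[Ew H0] Hr]; split => //.
  rewrite big_ord_recl H0 Hr subnKC //; by rewrite -ltnS.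
rewrite measure_bigsetU_ord.
- rewrite /= ge0_sume_distrr; last first.
    by move=> c _; apply: mule_ge0 => //; apply: convp_ge0.
  apply: eq_bigr => c _.
  have [H1 H2] := indepE_split c HE.
  rewrite (IH _ _ _ _ H2); first by rewrite H1 muleA.
  + by apply: measurableI => //; exact: (HX ord0).
  + by move=> i; exact: HX.
- move=> c; apply: measurableI; first by apply: measurableI => //; exact: (HX ord0).
  by apply: nat_rv_sum => i; exact: HX.
- by move=> i j _ _ [w [[[_ Hi] _] [[_ Hj] _]]]; apply: ord_inj; rewrite -Hi -Hj.
Qed.

Lemma SumIndep d (X : 'I_d -> T -> nat) (E : set T) : measurable E ->
  (forall i, nat_rv (X i)) -> indepE E X -> mutually_indep P X ->
  forall B, P (E `&` (fun w => (\sum_(i < d) X i w)%N) @^-1` B) =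
            (P E * P ((fun w => (\sum_(i < d) X i w)%N) @^-1` B))%E.
Proof.
move=> mE HX HE H0; apply: pt2set => //; first exact: nat_rv_sum.
move=> a; rewrite SumPt //.
by rewrite -[X in (_ * P X)%E]setTI SumPt // ?probability_setT ?mul1e //;
   apply: indepE_T.
Qed.

End Gen2.

Section Gen3.
Context {d0 : measure_display} {T : measurableType d0} {R : realType}.
Variable P : probability T R.

Definition indepM (m d : nat) (E : set T) (D : 'I_m -> 'I_d -> T -> nat) :=
  forall B : 'I_m -> 'I_d -> set nat,
    P (E `&` \bigcap_(k in [set: 'I_m]) \bigcap_(i in [set: 'I_d]) (D k i @^-1` B k i)) =
    (P E * \prod_(k < m) \prod_(i < d) P (D k i @^-1` B k i))%E.

Lemma indepM_split m d E (D : 'I_m.+1 -> 'I_d -> T -> nat) :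
  indepM E D -> forall C B,
  P (E `&` (\bigcap_(i in [set: 'I_d]) (D ord0 i @^-1` C i) `&`
      \bigcap_(k in [set: 'I_m]) \bigcap_(i in [set: 'I_d]) (D (lift ord0 k) i @^-1` B k i))) =
  (P E * ((\prod_(i < d) P (D ord0 i @^-1` C i)) *
      \prod_(k < m) \prod_(i < d) P (D (lift ord0 k) i @^-1` B k i)))%E.
Proof.
move=> H C B.
have := H (fun k => if unlift ord0 k is Some k' then B k' else C).
rewrite bigcapS big_ord_recl unlift_none.
have e1 : \bigcap_(k in [set: 'I_m]) \bigcap_(i in [set: 'I_d])
   (D (lift ord0 k) i @^-1` (if unlift ord0 (lift ord0 k) is Some k' then B k' else C) i)
  = \bigcap_(k in [set: 'I_m]) \bigcap_(i in [set: 'I_d]) (D (lift ord0 k) i @^-1` B k i).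
  by apply: eq_bigcapr => k _; rewrite liftK.
have e2 : (\prod_(k < m) \prod_(i < d)
   P (D (lift ord0 k) i @^-1` (if unlift ord0 (lift ord0 k) is Some k' then B k' else C) i))%E
  = (\prod_(k < m) \prod_(i < d) P (D (lift ord0 k) i @^-1` B k i))%E.
  by apply: eq_bigr => k _; rewrite liftK.
by rewrite e1 e2.
Qed.

Lemma ColIndep m : forall d (D : 'I_m -> 'I_d -> T -> nat) E, measurable E ->
  (forall k i, nat_rv (D k i)) -> indepM E D -> indepM setT D ->
  indepE P E (fun k w => (\sum_(i < d) D k i w)%N).
Proof.
elim: m => [|m IH] d D E mE HD HE H0 B.
  by rewrite bigcap_ord0 setIT big_ord0 mule1.
rewrite bigcapS big_ord_recl setIA.
set S0 := (fun w => (\sum_(i < d) D ord0 i w)%N).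
have HEi : forall E', measurable E' -> indepM E' D -> indepE P E' (D ord0).
  move=> E' mE' HE' C; have := indepM_split HE' C (fun _ _ => setT).
  rewrite (_ : \bigcap_(k in [set: 'I_m]) \bigcap_(i in [set: 'I_d])
     (D (lift ord0 k) i @^-1` setT) = setT); last by apply/seteqP; split => w.
  rewrite setIT (_ : (\prod_(k < m) \prod_(i < d) P (D (lift ord0 k) i @^-1` setT))%E = 1%E) ?mule1 //.
  by rewrite big1 // => k _; exact: prod_preT.
have Hmi : mutually_indep P (D ord0).
  by apply: indepT_E; apply: HEi.
have HS0 : P (E `&` S0 @^-1` B ord0) = (P E * P (S0 @^-1` B ord0))%E.
  apply: SumIndep; [exact: mE| move=> i; exact: HD| exact: HEi| exact: Hmi].
rewrite (IH d (fun k => D (lift ord0 k))).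
- by rewrite HS0 muleA.
- apply: measurableI => //; apply: nat_rv_pre; apply: nat_rv_sum => i; exact: HD.
- by move=> k i; exact: HD.
- move=> B'.
  set G := \bigcap_(k in _) \bigcap_(i in _) _.
  have HG : P (E `&` G) = (P E * \prod_(k < m) \prod_(i < d)
               P (D (lift ord0 k) i @^-1` B' k i))%E.
    have := indepM_split HE (fun _ => setT) B'.
    by rewrite bigcap_preT setTI prod_preT mul1e.
  have mG : measurable (E `&` G).
    apply: measurableI => //; apply: fin_bigcap_measurable => // k _.
    apply: fin_bigcap_measurable => // i _; apply: nat_rv_pre; exact: HD.
  have HEG : indepE P (E `&` G) (D ord0).
    move=> C; rewrite HG -setIA (setIC G) /G (indepM_split HE).
    by rewrite -muleA [X in _ = (_ * X)%E]muleC.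
  rewrite -setIA (setIC _ G) setIA.
  rewrite (SumIndep mG (fun i => HD ord0 i) HEG Hmi) HG HS0.
  by rewrite -!muleA [X in (_ * X)%E = _]muleC.
- move=> B'; have := indepM_split H0 (fun _ => setT) B'.
  by rewrite bigcap_preT setTI prod_preT mul1e.
Qed.

End Gen3.

Section Proc.
Context {d0 : measure_display} {T : measurableType d0} {R : realType}.
Variable P : probability T R.
Variable N : R -> T -> nat.

Definition Dn (tt : nat -> R) (k : nat) (w : T) := (N (tt k.+1) w - N (tt k) w)%N.

Definition SIprop := forall m (tt : nat -> R), tt 0%N = 0 ->
  (forall k, (k < m)%N -> tt k < tt k.+1) ->
  mutually_indep P (fun k : 'I_m => Dn tt k).

Lemma SI_of_poisson lam : poisson_process P lam N -> SIprop.
Proof.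
move=> [_ [Hind _]] m tt t0 Hlt.
have := Hind m (fun k : 'I_m.+1 => tt k) t0.
have e : (fun (k : 'I_m) w => (N (tt (lift ord0 k)) w - N (tt (widen_ord (leqnSn m) k)) w)%N)
   = (fun k : 'I_m => Dn tt k).
  by apply: funext => k; apply: funext => w; rewrite /Dn lift0.
rewrite e; apply => k; rewrite lift0 /=; exact: Hlt.
Qed.

Lemma NI : SIprop -> forall m (tt : nat -> R), tt 0%N = 0 ->
  (forall k, (k < m)%N -> tt k <= tt k.+1) ->
  mutually_indep P (fun k : 'I_m => Dn tt k).
Proof.
move=> SI m; elim: m => [|m IH] tt t0 Hle.
  by apply: SI => // k.
case: (pselect (exists j, (j < m.+1)%N /\ tt j = tt j.+1)) => [[j [Hj Heq]]|Hno];
  last first.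
  apply: SI => // k Hk; rewrite lt_neqAle Hle // andbT; apply/eqP => h.
  by apply: Hno; exists k.
pose tt' := fun n => if (n <= j)%N then tt n else tt n.+1.
have Hdn : forall q, Dn tt' q = Dn tt (bump j q).
  move=> q; rewrite /Dn /tt' /bump; case: (ltngtP q j) => H.
  - by rewrite add0n.
  - by rewrite add1n.
  - by rewrite add1n H Heq.
have t0' : tt' 0%N = 0 by rewrite /tt' leq0n.
have Hle' : forall k, (k < m)%N -> tt' k <= tt' k.+1.
  move=> k Hk; rewrite /tt'; case: (ltngtP k j) => H.
  - by apply: Hle; apply: ltn_trans Hk _.
  - by apply: Hle.
  - by rewrite H Heq; apply: Hle; rewrite ltnS -H.
have IH' := IH tt' t0' Hle'.
move=> B; pose j' : 'I_m.+1 := Ordinal Hj.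
rewrite (bigcapD1 j') (bigD1_ord j') //=.
have Hz : Dn tt j' = fun _ => 0%N by apply: funext => w; rewrite /Dn /= Heq subnn.
have /= := IH' (fun k => B (lift j' k)).
under eq_bigcapr do rewrite Hdn.
under eq_bigr do rewrite Hdn.
move=> HI.
case: (pselect (B j' 0%N)) => HB.
  rewrite (_ : Dn tt j' @^-1` B j' = setT); last by apply/seteqP; split=> w //=; rewrite Hz.
  by rewrite setTI probability_setT mul1e; exact: HI.
rewrite (_ : Dn tt j' @^-1` B j' = set0); last by apply/seteqP; split=> w //=; rewrite Hz.
by rewrite set0I measure0 mul0e.
Qed.

End Proc.

Section Pois.
Variable R : realType.

Lemma pois_conv (x y : R) (a : nat) :
  \sum_(c < a.+1) poisson_law x c * poisson_law y (a - c) = poisson_law (x + y) a.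
Proof.
rewrite /poisson_law opprD expRD (addrC x y) exprDn mulr_sumr mulr_suml.
apply: eq_bigr => c _.
have Hc : (c <= a)%N by rewrite -ltnS.
have hf := bin_fact Hc.
have f1 : (c`!)%:R != 0 :> R by rewrite pnatr_eq0 -lt0n fact_gt0.
have f2 : ((a - c)`!)%:R != 0 :> R by rewrite pnatr_eq0 -lt0n fact_gt0.
have f3 : ('C(a, c))%:R != 0 :> R by rewrite pnatr_eq0 -lt0n bin_gt0.
rewrite -hf !natrM -mulr_natr.
field.
by rewrite f1 f2 f3.
Qed.

End Pois.

Lemma convp_pois (R : realType) d (mu : 'I_d -> R) a :
  convp (fun i n => (poisson_law (mu i) n)%:E) a = (poisson_law (\sum_(i < d) mu i) a)%:E.
Proof.
elim: d mu a => [|d IH] mu a /=.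
  rewrite big_ord0 /poisson_law oppr0 expR0 mul1r.
  case: a => [|a] /=; first by rewrite expr0 fact0 divr1.
  by rewrite expr0n /= mul0r.
under eq_bigr do rewrite IH -EFinM.
by rewrite sumEFin pois_conv big_ord_recl.
Qed.

Lemma inord_lift m (k : 'I_m) : inord k.+1 = lift ord0 k :> 'I_m.+1.
Proof. by apply: ord_inj; rewrite lift0 inordK // ltnS. Qed.

Lemma inord_widen m (k : 'I_m) : inord k = widen_ord (leqnSn m) k :> 'I_m.+1.
Proof. by apply: ord_inj; rewrite inordK //= ltnS ltnW. Qed.

Section Back.
Context {d0 : measure_display} {T : measurableType d0} {R : realType}.
Variable P : probability T R.
Variable d : nat.
Variable N : 'I_d -> R -> T -> nat.
Hypothesis HC : forall i, counting_process (N i).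
Hypothesis HI : indep_processes P N.

Lemma indepk k (tt : 'I_d -> 'I_k -> R) (f : 'I_d -> {ffun 'I_k -> nat} -> nat) :
  (forall i j, 0 <= tt i j) ->
  mutually_indep P (fun i w => f i [ffun j => N i (tt i j) w]).
Proof.
move=> Hnn B; have := @HI k tt (fun i => [set v | B i (f i v)]) Hnn.
have e : forall i, [set w | [ffun j => N i (tt i j) w] \in [set v | B i (f i v)]]
   = (fun w => f i [ffun j => N i (tt i j) w]) @^-1` B i.
  by move=> i; apply/seteqP; split => w /=; rewrite in_setE.
by under eq_bigcapr do rewrite e; under eq_bigr do rewrite e.
Qed.

Lemma indep1 (t : 'I_d -> R) : (forall i, 0 <= t i) ->
  mutually_indep P (fun i w => N i (t i) w).
Proof.
move=> Ht; have := @indepk 1 (fun i _ => t i) (fun _ v => v ord0) (fun i _ => Ht i).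
have e : (fun i w => [ffun j : 'I_1 => N i (t i) w] ord0) = (fun i w => N i (t i) w).
  by apply: funext => i; apply: funext => w; rewrite ffunE.
by rewrite e.
Qed.

Lemma indep2 (s t : 'I_d -> R) : (forall i, 0 <= s i) -> (forall i, 0 <= t i) ->
  mutually_indep P (fun i w => (N i (t i) w - N i (s i) w)%N).
Proof.
move=> Hs Ht.
have Hnn : forall i (j : 'I_2), 0 <= (if j == ord0 then s i else t i).
  by move=> i j; case: (j == ord0).
have := @indepk 2 (fun i j => if j == ord0 then s i else t i)
  (fun _ v => (v ord_max - v ord0)%N) Hnn.
have e : (fun i w => ([ffun j : 'I_2 => N i (if j == ord0 then s i else t i) w] ord_max -
   [ffun j : 'I_2 => N i (if j == ord0 then s i else t i) w] ord0)%N) =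
   (fun i w => (N i (t i) w - N i (s i) w)%N).
  by apply: funext => i; apply: funext => w; rewrite !ffunE.
by rewrite e.
Qed.


Variable Lam : 'I_d -> R.
Hypothesis HP : forall i, poisson_process P (Lam i) (N i).

Let Ns := (fun (t : 'I_d -> R) w => (\sum_(i < d) N i (t i) w)%N).

Lemma HCrv i t : 0 <= t -> nat_rv (N i t).
Proof. by move=> Ht; apply: (HC i).1. Qed.

Lemma HCmono i s t w : 0 <= s -> s <= t -> (N i s w <= N i t w)%N.
Proof. by move=> Hs Hst; apply: (HC i).2.2. Qed.

Lemma back_count : mcounting_process Ns.
Proof.
split; [|split].
- by move=> t Ht; apply: nat_rv_sum => i; apply: HCrv; exact: Ht.
- by move=> w; rewrite /Ns big1 // => i _; exact: (HC i).2.1.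
- move=> s t w Hs Hst; apply: leq_sum => i _; apply: HCmono; [exact: Hs|exact: Hst].
Qed.

Lemma back_iii (t : 'I_d -> R) : nonneg_pt t ->
  has_poisson_law P (Ns t) (\sum_(i < d) Lam i * t i).
Proof.
move=> Ht n; rewrite /Ns -[X in P X]setTI SumPt //.
- rewrite probability_setT mul1e -convp_pois; congr convp.
  apply: funext => i; apply: funext => k.
  by apply: (HP i).2.2.2; exact: Ht.
- by move=> i; apply: HCrv; exact: Ht.
- by apply: indepE_T; exact: indep1.
Qed.

Lemma back_ii (s t : 'I_d -> R) : nonneg_pt s -> ple s t ->
  same_law P (fun w => (Ns t w - Ns s w)%N) (Ns (fun i => t i - s i)).
Proof.
move=> Hs Hst.
have Ht : forall i, 0 <= t i by move=> i; apply: le_trans (Hs i) (Hst i).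
have e : (fun w => (Ns t w - Ns s w)%N) = (fun w => (\sum_(i < d) (N i (t i) w - N i (s i) w))%N).
  apply: funext => w; rewrite /Ns sumnB // => i _; apply: HCmono; [exact: Hs|exact: Hst].
have rvD : forall i, nat_rv (fun w => (N i (t i) w - N i (s i) w)%N).
  by move=> i; apply: (nat_rv_comp2 subn); apply: HCrv.
have rvM : forall i, nat_rv (N i (t i - s i)).
  by move=> i; apply: HCrv; rewrite subr_ge0.
rewrite e; apply: ptlaw.
- by apply: nat_rv_sum.
- by rewrite /Ns; apply: nat_rv_sum.
move=> a; rewrite -[X in P X = _]setTI -[X in _ = P X]setTI /Ns.
rewrite (SumPt (X := fun i w => (N i (t i) w - N i (s i) w)%N)) //; last first.
  by apply: indepE_T; exact: indep2.
rewrite (SumPt (X := fun i => N i (t i - s i))) //; last first.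
  apply: indepE_T; apply: (indep1 (t := fun i => t i - s i)) => i.
  by rewrite subr_ge0.
congr (_ * _)%E; congr convp; apply: funext => i; apply: funext => n.
exact: ((HP i).2.2.1 (s i) (t i) (Hs i) (Hst i) [set n]).
Qed.


Lemma back_i m (tt : 'I_m.+1 -> 'I_d -> R) : tt ord0 = (fun _ => 0) ->
  (forall k : 'I_m, plt (tt (widen_ord (leqnSn m) k)) (tt (lift ord0 k))) ->
  mutually_indep P (fun (k : 'I_m) w =>
     (Ns (tt (lift ord0 k)) w - Ns (tt (widen_ord (leqnSn m) k)) w)%N).
Proof.
move=> H0 Hplt.
have Hnn : forall (k : 'I_m.+1) i, 0 <= tt k i.
  have H : forall n (Hn : (n < m.+1)%N) i, 0 <= tt (Ordinal Hn) i.
    elim=> [|n IHn] Hn i.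
      by rewrite (_ : Ordinal Hn = ord0) ?H0 //; apply: ord_inj.
    have Hn' : (n < m)%N by [].
    have := (Hplt (Ordinal Hn')).1 i.
    rewrite (_ : lift ord0 (Ordinal Hn') = Ordinal Hn); last by apply: ord_inj; rewrite lift0.
    apply: le_trans.
    rewrite (_ : widen_ord _ (Ordinal Hn') = Ordinal (leqW Hn')); last by apply: ord_inj.
    exact: IHn.
  by move=> k i; case: k => n Hn; exact: H.
pose D := fun (k : 'I_m) (i : 'I_d) w =>
  (N i (tt (lift ord0 k) i) w - N i (tt (widen_ord (leqnSn m) k) i) w)%N.
have e : (fun (k : 'I_m) w => (Ns (tt (lift ord0 k)) w - Ns (tt (widen_ord (leqnSn m) k)) w)%N)
   = (fun k w => (\sum_(i < d) D k i w)%N).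
  apply: funext => k; apply: funext => w.
  rewrite /Ns sumnB // => i _; apply: HCmono; [exact: Hnn | exact: (Hplt k).1 i].
rewrite e; apply: indepT_E.
have rvD : forall k i, nat_rv (D k i).
  by move=> k i; apply: (nat_rv_comp2 subn); apply: HCrv; exact: Hnn.
have HM : indepM P setT D.
  move=> B; rewrite setTI probability_setT mul1e.
  pose Bt := fun i => [set v : {ffun 'I_m.+1 -> nat} | forall k : 'I_m,
     B k i (v (lift ord0 k) - v (widen_ord (leqnSn m) k))%N].
  have e1 : \bigcap_(k in [set: 'I_m]) \bigcap_(i in [set: 'I_d]) (D k i @^-1` B k i)
    = \bigcap_(i in [set: 'I_d]) [set w | [ffun j => N i (tt j i) w] \in Bt i].
    apply/seteqP; split => w /=.
      move=> H i _ /=; rewrite in_setE /= => k; rewrite !ffunE; exact: (H k I i I).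
    by move=> H k _ i _; have /= := H i I; rewrite in_setE /= => /(_ k); rewrite !ffunE.
  rewrite e1 (@HI m.+1 (fun i j => tt j i) Bt (fun i j => Hnn j i)).
  rewrite exchange_big; apply: eq_bigr => i _.
  have e2 : [set w | [ffun j => N i (tt j i) w] \in Bt i] =
     \bigcap_(k in [set: 'I_m]) (D k i @^-1` B k i).
    apply/seteqP; split => w /=.
      by rewrite in_setE /= => H k _; have := H k; rewrite !ffunE.
    by move=> H; rewrite in_setE /= => k; rewrite !ffunE; exact: (H k I).
  rewrite e2.
  have t0 : tt (inord 0) i = 0.
    by rewrite (_ : inord 0 = ord0) ?H0 //; apply: ord_inj; rewrite inordK.
  have Hmo : forall k, (k < m)%N -> tt (inord k) i <= tt (inord k.+1) i.
    move=> k Hk; have := (Hplt (Ordinal Hk)).1 i.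
    by rewrite -inord_lift -inord_widen.
  have := NI (SI_of_poisson (HP i)) (tt := fun n => tt (inord n) i) t0 Hmo.
  have e3 : (fun k : 'I_m => Dn (N i) (fun n => tt (inord n) i) k) = (fun k => D k i).
    apply: funext => k; apply: funext => w.
    by rewrite /Dn /D inord_lift inord_widen.
  by rewrite e3; apply.
by apply: ColIndep.
Qed.

End Back.

Section Fwd.
Context {d0 : measure_display} {T : measurableType d0} {R : realType}.
Variable P : probability T R.

Lemma mi_ext m (X Y : 'I_m -> T -> nat) : mutually_indep P X ->
  (forall k w, X k w = Y k w) -> mutually_indep P Y.
Proof.
move=> H e; suff -> : Y = X by [].
by apply: funext => k; apply: funext => w; rewrite e.
Qed.

Lemma sl_ext (f g f' g' : T -> nat) : same_law P f g ->
  (forall w, f w = f' w) -> (forall w, g w = g' w) -> same_law P f' g'.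
Proof.
move=> H e1 e2; suff [-> ->] : f' = f /\ g' = g by [].
by split; apply: funext => w; rewrite ?e1 ?e2.
Qed.

Lemma hpl_ext (X Y : T -> nat) mu mu' : has_poisson_law P X mu ->
  (forall w, X w = Y w) -> mu = mu' -> has_poisson_law P Y mu'.
Proof.
move=> H e <-; suff -> : Y = X by [].
by apply: funext => w; rewrite e.
Qed.

Variable d : nat.
Variable N : 'I_d -> R -> T -> nat.
Hypothesis HC : forall i, counting_process (N i).
Variable Lam : 'I_d -> R.

Lemma forward : mpp P Lam (fun t w => (\sum_(i < d) N i (t i) w)%N) ->
  forall i, poisson_process P (Lam i) (N i).
Proof.
move=> [Hc [Hi [Hs Hm]]] i.
pose e := fun (t : R) (j : 'I_d) => if j == i then t else 0.
have Ne : forall t w, (\sum_(j < d) N j (e t j) w)%N = N i t w.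
  move=> t w; rewrite (bigD1 i) //= /e eqxx big1 ?addn0 // => j /negbTE ->.
  exact: (HC j).2.1.
have Ne2 : forall t s w, (\sum_(j < d) N j (e t j - e s j) w)%N = N i (t - s) w.
  move=> t s w; rewrite (bigD1 i) //= /e eqxx big1 ?addn0 // => j /negbTE ->.
  by rewrite subr0; exact: (HC j).2.1.
have enn : forall t, 0 <= t -> nonneg_pt (e t).
  by move=> t Ht j; rewrite /e; case: (j == i).
have ele : forall s t, s <= t -> ple (e s) (e t).
  by move=> s t Hst j; rewrite /e; case: (j == i).
split; first exact: HC.
split.
  move=> m tt t0 Hlt.
  have H0 : e (tt ord0) = (fun _ => 0).
    by apply: funext => j; rewrite /e t0; case: (j == i).
  have Hp : forall k : 'I_m, plt (e (tt (widen_ord (leqnSn m) k))) (e (tt (lift ord0 k))).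
    move=> k; split; first by apply: ele; apply: ltW; exact: Hlt.
    move=> h; have := congr1 (fun f => f i) h; rewrite /e eqxx => h'.
    by move: (Hlt k); rewrite h' ltxx.
  apply: (mi_ext (Hi m (fun k => e (tt k)) H0 Hp)) => k w /=.
  by rewrite !Ne.
split.
  move=> s t Hs0 Hst.
  apply: (sl_ext (Hs (e s) (e t) (enn s Hs0) (ele s t Hst))) => w /=.
    by rewrite !Ne.
  exact: Ne2.
move=> t Ht.
apply: (hpl_ext (Hm (e t) (enn t Ht))) => [w /=|]; first exact: Ne.
rewrite (bigD1 i) //= /e eqxx big1 ?addr0 // => j /negbTE ->.
by rewrite mulr0.
Qed.

End Fwd.

Unset Implicit Arguments.
Theorem mainTheorem1 (d0 : measure_display) (T : measurableType d0)
  (R : realType) (P : probability T R) (d : nat) (N : 'I_d -> R -> T -> nat)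
  (Lam : 'I_d -> R) :
  (0 < d)%N ->
  (forall i, counting_process (N i)) ->
  indep_processes P N ->
  (forall i, 0 < Lam i) ->
  (mpp P Lam (fun t w => (\sum_(i < d) N i (t i) w)%N) <->
   (forall i, poisson_process P (Lam i) (N i))).
Proof.
move=> _ HC HI _; split; first exact: forward.
move=> HP; split; first exact: back_count.
split; first by move=> m tt t0 Hp; exact: (back_i HC HI HP).
split; first by move=> s t Hs Hst; exact: (back_ii HC HI HP).
by move=> t Ht; exact: (back_iii HC HI HP).
Qed.
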